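(* Let $G=\mathrm{SL}_3(\mathbb C)$, $B$ the upper-triangular, $U$ the upper unitriangular and $T$ the diagonal matrices in $G$. Let $H$ be the group of matrices $\begin{pmatrix} t&0&a\\0&1&b\\0&0&t^{-1}\end{pmatrix}$ with $a,b\in\mathbb C$, $t\in\mathbb C^\times$, and let $N$ be its subgroup with $t=1$. Then $H$ is a connected solvable spherical subgroup of $G$, $N_G(H)=T\ltimes N$, and $N_G(N_G(H))=N_G(H)\cup\rho N_G(H)$ where $\rho=\begin{pmatrix}0&1&0\\1&0&0\\0&0&-1\end{pmatrix}$. In particular $N_G(N_G(H))\neq N_G(H)$.
   Context: A closed subgroup $H\subset G$ of an algebraic group $G$ is spherical if a Borel subgroup of $G$ has an open orbit on $G/H$. $N_G(K)$ denotes the normalizer of $K$ in $G$. *)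

(* Defs.v *)
From HB Require Import structures.
From mathcomp Require Import all_boot all_order all_algebra.
Set Implicit Arguments. Unset Strict Implicit. Unset Printing Implicit Defensive.
Import GRing.Theory.
Local Open Scope ring_scope.

Section SL3.
Variable F : fieldType.

Definition mset := 'M[F]_3 -> Prop.

Definition SL3 : mset := fun A => \det A = 1.

Definition mk3 (a b c d e f g h i : F) : 'M[F]_3 :=
  \matrix_(r < 3, s < 3)
    nth 0 (nth [::] [:: [:: a; b; c]; [:: d; e; f]; [:: g; h; i]] r) s.

Inductive mpoly : Type :=
| PVar of 'I_3 & 'I_3
| PConst of F
| PAdd of mpoly & mpoly
| PMul of mpoly & mpoly.

Fixpoint peval (p : mpoly) (A : 'M[F]_3) : F :=
  match p with
  | PVar i j => A i j
  | PConst c => c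
  | PAdd p q => peval p A + peval q A
  | PMul p q => peval p A * peval q A
  end.

(* Zariski-closed subsets of G = SL3(F): common zero loci in G of a family of
   polynomials in the matrix entries *)
Definition zclosed (S : mset) : Prop :=
  exists P : mpoly -> Prop,
    forall A, S A <-> (SL3 A /\ forall p, P p -> peval p A = 0).

Definition zopen (S : mset) : Prop :=
  (forall A, S A -> SL3 A) /\ zclosed (fun A => SL3 A /\ ~ S A).

Definition msubset (S1 S2 : mset) : Prop := forall A, S1 A -> S2 A.
Definition mseteq (S1 S2 : mset) : Prop := forall A, S1 A <-> S2 A.

Definition subgroup (K : mset) : Prop :=
  msubset K SL3 /\ K 1%:M /\
  (forall x y, K x -> K y -> K (x *m y)) /\
  (forall x, K x -> K (invmx x)).

Definition closed_subgroup (K : mset) : Prop := subgroup K /\ zclosed K.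

(* connectedness for the Zariski topology (subspace topology on K) *)
Definition zconnected (K : mset) : Prop :=
  forall Z1 Z2 : mset, zclosed Z1 -> zclosed Z2 ->
    (forall x, K x -> Z1 x \/ Z2 x) ->
    (forall x, K x -> Z1 x -> Z2 x -> False) ->
    msubset K Z1 \/ msubset K Z2.

Inductive gen (S : mset) : mset :=
| gen_one : gen S 1%:M
| gen_in x : S x -> gen S x
| gen_mul x y : gen S x -> gen S y -> gen S (x *m y)
| gen_inv x : gen S x -> gen S (invmx x).

Definition commutator (x y : 'M[F]_3) : 'M[F]_3 :=
  invmx x *m invmx y *m x *m y.

Definition derived (K : mset) : mset :=
  gen (fun z => exists x y, K x /\ K y /\ z = commutator x y).

Definition solvable_grp (K : mset) : Prop :=
  exists n, msubset (iter n derived K) (fun z => z = 1%:M).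

Definition borel (Bo : mset) : Prop :=
  closed_subgroup Bo /\ zconnected Bo /\ solvable_grp Bo /\
  forall K, closed_subgroup K -> zconnected K -> solvable_grp K ->
    msubset Bo K -> mseteq K Bo.

(* The orbit of Bo through gH in G/H, pulled back to G, is the double coset
   Bo g H; G/H carries the quotient topology of G -> G/H. *)
Definition spherical (H : mset) : Prop :=
  closed_subgroup H /\
  exists Bo, borel Bo /\ exists g, SL3 g /\
    zopen (fun A => exists b h, Bo b /\ H h /\ A = b *m g *m h).

Definition normalizer (K : mset) : mset :=
  fun g => SL3 g /\ forall x, K x <-> K (g *m x *m invmx g).

Definition Tdiag : mset :=
  fun A => SL3 A /\ forall i j : 'I_3, i != j -> A i j = 0.

Definition Hgrp : mset :=
  fun A => exists t a b : F, t != 0 /\ A = mk3 t 0 a 0 1 b 0 0 t^-1.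

Definition Ngrp : mset :=
  fun A => exists a b : F, A = mk3 1 0 a 0 1 b 0 0 1.

Definition rho : 'M[F]_3 := mk3 0 1 0 1 0 0 0 0 (-1).

Definition is_semidirect (M T N : mset) : Prop :=
  mseteq M (fun A => exists t n, T t /\ N n /\ A = t *m n) /\
  (forall x, T x -> N x -> x = 1%:M) /\
  (forall t n, T t -> N n -> N (t *m n *m invmx t)).

End SL3.

(* Main.v *)
Require Import Defs.
From HB Require Import structures.
From mathcomp Require Import all_boot all_order all_algebra.
From mathcomp Require Import ring.
From Stdlib Require Import Classical.
Import GRing.Theory.
Local Open Scope ring_scope.
Set Implicit Arguments. Unset Strict Implicit. Unset Printing Implicit Defensive.

Notation i0 := (@Ordinal 3 0 isT).
Notation i1 := (@Ordinal 3 1 isT).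
Notation i2 := (@Ordinal 3 2 isT).

Lemma ord3P (P : 'I_3 -> Prop) : P i0 -> P i1 -> P i2 -> forall i, P i.
Proof.
move=> H0 H1 H2 [[|[|[|i]]] Hi] //.
- by rewrite (bool_irrelevance Hi isT).
- by rewrite (bool_irrelevance Hi isT).
- by rewrite (bool_irrelevance Hi isT).
Qed.

Lemma mk3E (F : fieldType) (A : 'M[F]_3) :
  A = mk3 (A i0 i0) (A i0 i1) (A i0 i2) (A i1 i0) (A i1 i1) (A i1 i2)
          (A i2 i0) (A i2 i1) (A i2 i2).
Proof. apply/matrixP => i j; rewrite mxE. by elim/ord3P: i; elim/ord3P: j. Qed.

Lemma mk3_mul (F : fieldType) (a b c d e f g h i a' b' c' d' e' f' g' h' i' : F) :
  mk3 a b c d e f g h i *m mk3 a' b' c' d' e' f' g' h' i' =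
  mk3 (a*a' + b*d' + c*g') (a*b' + b*e' + c*h') (a*c' + b*f' + c*i')
      (d*a' + e*d' + f*g') (d*b' + e*e' + f*h') (d*c' + e*f' + f*i')
      (g*a' + h*d' + i*g') (g*b' + h*e' + i*h') (g*c' + h*f' + i*i').
Proof.
apply/matrixP => r s; rewrite !mxE !big_ord_recr big_ord0 /= !mxE /=.
by elim/ord3P: r; elim/ord3P: s; rewrite /= add0r.
Qed.

Lemma det_mk3 (F : fieldType) (a b c d e f g h i : F) :
  \det (mk3 a b c d e f g h i) =
  a*e*i - a*f*h - b*d*i + b*f*g + c*d*h - c*e*g.
Proof.
rewrite (expand_det_row _ i0) !big_ord_recr big_ord0 /= /cofactor.
rewrite !(expand_det_row _ ord0) !big_ord_recr big_ord0 /= /cofactor.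
rewrite !(expand_det_row _ ord0) !big_ord_recr !big_ord0 /= /cofactor.
rewrite !det_mx00 !mxE /=. ring.
Qed.

Lemma mk3_1 (F : fieldType) : 1%:M = mk3 1 0 0 0 1 0 0 0 (1 : F).
Proof. apply/matrixP => i j; rewrite !mxE. by elim/ord3P: i; elim/ord3P: j. Qed.

Lemma mk3_inj (F : fieldType) (a b c d e f g h i a' b' c' d' e' f' g' h' i' : F) :
  mk3 a b c d e f g h i = mk3 a' b' c' d' e' f' g' h' i' ->
  [/\ a = a', b = b', c = c', d = d' & [/\ e = e', f = f', g = g', h = h' & i = i']].
Proof.
move=> E.
have Q : forall r s, (mk3 a b c d e f g h i) r s = (mk3 a' b' c' d' e' f' g' h' i') r s by rewrite E.
move: (Q i0 i0) (Q i0 i1) (Q i0 i2) (Q i1 i0) (Q i1 i1) (Q i1 i2) (Q i2 i0) (Q i2 i1) (Q i2 i2).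
by rewrite !mxE /=.
Qed.

Lemma mk3_ij (F : fieldType) (a b c d e f g h i : F) :
  [/\ mk3 a b c d e f g h i i0 i0 = a, mk3 a b c d e f g h i i0 i1 = b,
      mk3 a b c d e f g h i i0 i2 = c, mk3 a b c d e f g h i i1 i0 = d &
  [/\ mk3 a b c d e f g h i i1 i1 = e, mk3 a b c d e f g h i i1 i2 = f,
      mk3 a b c d e f g h i i2 i0 = g, mk3 a b c d e f g h i i2 i1 = h &
      mk3 a b c d e f g h i i2 i2 = i]].
Proof. by rewrite !mxE. Qed.

Lemma inv_eq (F : fieldType) (A B : 'M[F]_3) : A *m B = 1%:M -> invmx A = B.
Proof.
move=> AB; have [uA _] := mulmx1_unit AB.
by rewrite -[RHS](mulKmx uA) AB mulmx1.
Qed.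

Lemma SL3_unit (F : fieldType) (A : 'M[F]_3) : SL3 A -> A \in unitmx.
Proof. by rewrite /SL3 unitmxE => ->; rewrite unitr1. Qed.


Lemma det_mk3_0 (F : fieldType) (A : 'M[F]_3) :
  \det A = A i0 i0 * A i1 i1 * A i2 i2 - A i0 i0 * A i1 i2 * A i2 i1
         - A i0 i1 * A i1 i0 * A i2 i2 + A i0 i1 * A i1 i2 * A i2 i0
         + A i0 i2 * A i1 i0 * A i2 i1 - A i0 i2 * A i1 i1 * A i2 i0.
Proof. by rewrite {1}[A]mk3E det_mk3. Qed.

Lemma SL3_mul (F : fieldType) (A B : 'M[F]_3) : SL3 A -> SL3 B -> SL3 (A *m B).
Proof. by rewrite /SL3 det_mulmx => -> ->; rewrite mulr1. Qed.

Lemma SL3_inv (F : fieldType) (A : 'M[F]_3) : SL3 A -> SL3 (invmx A).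
Proof. by rewrite /SL3 det_inv => ->; rewrite invr1. Qed.

Lemma conj_in (F : fieldType) (K : mset F) (w u Y : 'M[F]_3) :
  subgroup K -> K w -> K u -> w *m u = Y *m w -> K Y.
Proof.
move=> [sub [one [mul inv]]] Kw Ku E.
have uw : w \in unitmx by apply: SL3_unit; apply: sub.
have -> : Y = w *m u *m invmx w by rewrite E mulmxK.
exact: (mul _ _ (mul _ _ Kw Ku) (inv _ Kw)).
Qed.

Lemma normalizer_crit (F : fieldType) (S K : mset F) :
  (forall g, S g -> SL3 g) -> (forall g, S g -> S (invmx g)) ->
  (forall g x, S g -> K x -> K (g *m x *m invmx g)) ->
  forall g, S g -> normalizer K g.
Proof.
move=> sS iS cS g Sg; split; first exact: sS.
move=> x; split; first exact: cS.
move=> Ky; have := cS _ _ (iS _ Sg) Ky.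
have ug : g \in unitmx := SL3_unit (sS _ Sg).
suff -> : invmx g *m (g *m x *m invmx g) *m invmx (invmx g) = x by [].
by rewrite invmxK !mulmxA mulVmx // mul1mx mulmxKV.
Qed.

Lemma F01 (F : fieldType) : (0 : F) <> 1.
Proof. by move=> h; have := @oner_neq0 F; rewrite -h eqxx. Qed.

Lemma eq_ring (F : fieldType) (l r L R : F) : L = R -> l = L -> r = R -> l = r.
Proof. by move=> E -> ->. Qed.

Lemma conj_eq (F : fieldType) (g x Y : 'M[F]_3) : SL3 g ->
  g *m x *m invmx g = Y -> g *m x = Y *m g.
Proof. by move=> Sg <-; rewrite mulmxKV //; apply: SL3_unit. Qed.

Lemma eqr1 (F : fieldType) (l r L R : F) : L = R -> l - r = L - R -> l = r.
Proof. by move=> -> /eqP; rewrite subrr subr_eq0 => /eqP. Qed.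

Lemma eqr2 (F : fieldType) (l r L R : F) : L = R -> l - r = R - L -> l = r.
Proof. by move=> -> /eqP; rewrite subrr subr_eq0 => /eqP. Qed.

Lemma invmxM3 (F : fieldType) (A B : 'M[F]_3) : SL3 A -> SL3 B ->
  invmx (A *m B) = invmx B *m invmx A.
Proof.
move=> SA SB; apply: inv_eq.
by rewrite mulmxA mulmxK ?SL3_unit // mulmxV ?SL3_unit.
Qed.

Lemma normalizer_ext (F : fieldType) (K K' : mset F) :
  mseteq K K' -> mseteq (normalizer K) (normalizer K').
Proof.
move=> E g; split; case=> Sg N; split=> // x.
  by rewrite -!E.
by rewrite !E.
Qed.


Ltac fld := field; do ?[apply/andP; split]; first [done | exact: oner_neq0 | (rewrite ?mulf_neq0 ?invr_eq0 ?oppr_eq0 //) ].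
Ltac lin E := first [ (apply: (eqr1 E); ring) | (apply: (eqr2 E); ring) ].

Lemma H_SL3 (F : fieldType) : msubset (@Hgrp F) (@SL3 F).
Proof. move=> A [t [a [b [t0 ->]]]]; rewrite /SL3 det_mk3; fld. Qed.

Lemma H_subgroup (F : fieldType) : subgroup (@Hgrp F).
Proof.
split; first exact: H_SL3.
split; first by exists 1, 0, 0; rewrite oner_eq0 invr1 mk3_1.
split.
  move=> x y [t [a [b [t0 ->]]]] [t' [a' [b' [t0' ->]]]].
  exists (t * t'), (t * a' + a * t'^-1), (b' + b * t'^-1).
  rewrite mulf_neq0 //; split=> //; rewrite mk3_mul; congr mk3; fld.
move=> x [t [a [b [t0 ->]]]].
exists t^-1, (-a), (- b * t); rewrite invr_eq0; split=> //.
apply: inv_eq; rewrite mk3_mul mk3_1; congr mk3; fld.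
Qed.

Definition PH (F : fieldType) (p : mpoly F) : Prop :=
  p = PVar F i0 i1 \/ p = PVar F i1 i0 \/ p = PVar F i2 i0 \/ p = PVar F i2 i1 \/
  p = PAdd (PVar F i1 i1) (PConst (-1)).

Lemma H_zclosed (F : fieldType) : zclosed (@Hgrp F).
Proof.
exists (@PH F) => A; split.
  move=> HA; split; first exact: H_SL3.
  case: HA => [t [a [b [t0 ->]]]] p.
  by case=> [->|[->|[->|[->|->]]]] /=; rewrite !mxE /= ?subrr.
case=> SA P.
have e01 := P _ (or_introl erefl).
have e10 := P _ (or_intror (or_introl erefl)).
have e20 := P _ (or_intror (or_intror (or_introl erefl))).
have e21 := P _ (or_intror (or_intror (or_intror (or_introl erefl)))).
have e11 := P _ (or_intror (or_intror (or_intror (or_intror erefl)))).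
move: e01 e10 e20 e21 e11 => /= e01 e10 e20 e21 /eqP; rewrite subr_eq0 => /eqP e11.
move: SA; rewrite /SL3 [A]mk3E det_mk3 e01 e10 e20 e21 e11 => dA.
have a0 : A i0 i0 != 0.
  by apply/eqP => a0; apply: (@F01 F); rewrite -dA a0; ring.
exists (A i0 i0), (A i0 i2), (A i1 i2); split=> //; congr mk3.
apply: (mulfI a0); rewrite mulfV //; rewrite -dA; ring.
Qed.

Lemma H_closed (F : fieldType) : closed_subgroup (@Hgrp F).
Proof. split; [exact: H_subgroup | exact: H_zclosed]. Qed.

Definition ratrep (F : fieldType) (D : {poly F}) (f : F -> F) :=
  exists (q : {poly F}) (n : nat), forall s, D.[s] != 0 -> f s * D.[s] ^+ n = q.[s].

Lemma ratrep_peval (F : fieldType) (D : {poly F}) (gam : F -> 'M[F]_3) :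
  (forall i j, ratrep D (fun s => gam s i j)) ->
  forall p, ratrep D (fun s => peval p (gam s)).
Proof.
move=> hij; elim=> [i j|c|p1 IH1 p2 IH2|p1 IH1 p2 IH2] /=.
- exact: hij.
- by exists c%:P, 0%N => s _; rewrite expr0 mulr1 hornerC.
- case: IH1 => q1 [n1 E1]; case: IH2 => q2 [n2 E2].
  exists (q1 * D ^+ n2 + q2 * D ^+ n1), (n1 + n2)%N => s Ds.
  rewrite !hornerE -E1 // -E2 // exprD; ring.
- case: IH1 => q1 [n1 E1]; case: IH2 => q2 [n2 E2].
  exists (q1 * q2), (n1 + n2)%N => s Ds.
  rewrite !hornerE -E1 // -E2 // exprD; ring.
Qed.

Lemma nonroot (F : closedFieldType) (Q : {poly F}) : Q != 0 -> exists s, Q.[s] != 0.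
Proof.
move=> Q0.
have : size (Q * 'X + (-1)%:P) != 1%N.
  by rewrite size_MXaddC (negbTE Q0) /= eqSS size_poly_eq0.
case/closed_rootP => s; rewrite /root !hornerE => /eqP h.
exists s; apply/eqP => Qs; move: h; rewrite Qs mul0r add0r => /eqP.
by rewrite oppr_eq0 oner_eq0.
Qed.

Lemma zconn_path (F : closedFieldType) (K : mset F) :
  (forall h0 h1, K h0 -> K h1 -> exists (D : {poly F}) (gam : F -> 'M[F]_3),
    [/\ D.[0] != 0, D.[1] != 0, gam 0 = h0, gam 1 = h1 &
     (forall s, D.[s] != 0 -> K (gam s)) /\
     (forall i j, ratrep D (fun s => gam s i j))]) ->
  zconnected K.
Proof.
move=> hp Z1 Z2 [P1 c1] [P2 c2] cov _.
apply: NNPP => nsub.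
have [n1 n2] : ~ msubset K Z1 /\ ~ msubset K Z2 by split=> h; apply: nsub; [left|right].
have [h0 [K0 nZ0]] : exists h0, K h0 /\ ~ Z1 h0.
  by apply: NNPP => nex; apply: n1 => x Kx; apply: NNPP => nz; apply: nex; exists x.
have [h1 [K1 nZ1]] : exists h1, K h1 /\ ~ Z2 h1.
  by apply: NNPP => nex; apply: n2 => x Kx; apply: NNPP => nz; apply: nex; exists x.
have SL0 : SL3 h0 by case: (cov _ K0) => [/(proj1 (c1 _)) [] | /(proj1 (c2 _)) []].
have SL1 : SL3 h1 by case: (cov _ K1) => [/(proj1 (c1 _)) [] | /(proj1 (c2 _)) []].
have [p1 [P1p1 np1]] : exists p, P1 p /\ peval p h0 != 0.
  apply: NNPP => nex; apply: nZ0; apply/(proj2 (c1 _)); split=> // p Pp.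
  by apply: NNPP => ne; apply: nex; exists p; split=> //; apply/eqP.
have [p2 [P2p2 np2]] : exists p, P2 p /\ peval p h1 != 0.
  apply: NNPP => nex; apply: nZ1; apply/(proj2 (c2 _)); split=> // p Pp.
  by apply: NNPP => ne; apply: nex; exists p; split=> //; apply/eqP.
have [D [gam [D0 D1 g0 g1 [Kg rg]]]] := hp _ _ K0 K1.
have [q1 [m1 E1]] := ratrep_peval rg p1.
have [q2 [m2 E2]] := ratrep_peval rg p2.
have q10 : q1 != 0.
  apply/eqP => q0; move: (E1 0 D0); rewrite q0 horner0 g0 => /eqP.
  by rewrite mulf_eq0 expf_eq0 (negbTE np1) (negbTE D0) andbF.
have q20 : q2 != 0.
  apply/eqP => q0; move: (E2 1 D1); rewrite q0 horner0 g1 => /eqP.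
  by rewrite mulf_eq0 expf_eq0 (negbTE np2) (negbTE D1) andbF.
have DD : D != 0 by apply/eqP => d; move: D0; rewrite d horner0 eqxx.
have [s] := nonroot (mulf_neq0 (mulf_neq0 q10 q20) DD).
rewrite !hornerE !mulf_eq0 !negb_or => /andP [/andP [q1s q2s] Ds].
case: (cov _ (Kg _ Ds)) => [/(proj1 (c1 _)) [_ /(_ _ P1p1) z] | /(proj1 (c2 _)) [_ /(_ _ P2p2) z]].
  by move: q1s; rewrite -E1 // z mul0r eqxx.
by move: q2s; rewrite -E2 // z mul0r eqxx.
Qed.

Lemma ratrep_polyE (F : fieldType) (D q : {poly F}) (f : F -> F) :
  (forall s, f s = q.[s]) -> ratrep D f.
Proof. by move=> E; exists q, 0%N => s _; rewrite expr0 mulr1 E. Qed.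

Lemma ratrep_invE (F : fieldType) (D : {poly F}) (f : F -> F) :
  (forall s, D.[s] != 0 -> f s = D.[s]^-1) -> ratrep D f.
Proof. by move=> E; exists 1, 1%N => s Ds; rewrite E // expr1 mulVf // hornerE. Qed.

Definition lin (F : fieldType) (x y : F) : {poly F} := x%:P + 'X * (y - x)%:P.

Lemma linE (F : fieldType) (x y s : F) : (lin x y).[s] = x + s * (y - x).
Proof. by rewrite /lin !hornerE. Qed.

Lemma lin0 (F : fieldType) (x y : F) : (lin x y).[0] = x.
Proof. by rewrite linE mul0r addr0. Qed.

Lemma lin1 (F : fieldType) (x y : F) : (lin x y).[1] = y.
Proof. by rewrite linE mul1r addrC subrK. Qed.

Lemma H_connected (F : closedFieldType) : zconnected (@Hgrp F).
Proof.
apply: zconn_path => _ _ [t0 [a0 [b0 [t00 ->]]]] [t1 [a1 [b1 [t10 ->]]]].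
pose D := lin t0 t1.
exists D, (fun s => mk3 D.[s] 0 (lin a0 a1).[s] 0 1 (lin b0 b1).[s] 0 0 (D.[s])^-1).
split; rewrite ?lin0 ?lin1 //.
split; first by move=> s Ds; exists D.[s], (lin a0 a1).[s], (lin b0 b1).[s].
move=> i j; elim/ord3P: i; elim/ord3P: j.
all: first [ apply: ratrep_invE => s _; by rewrite mxE
           | apply: (@ratrep_polyE _ _ 0) => s; by rewrite mxE /= horner0
           | apply: (@ratrep_polyE _ _ 1) => s; by rewrite mxE /= hornerE
           | apply: (@ratrep_polyE _ _ D) => s; by rewrite mxE
           | apply: (@ratrep_polyE _ _ (lin a0 a1)) => s; by rewrite mxE
           | apply: (@ratrep_polyE _ _ (lin b0 b1)) => s; by rewrite mxE ].
Qed.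

Lemma gen_sub (F : fieldType) (S K : mset F) :
  msubset S K -> K 1%:M -> (forall x y, K x -> K y -> K (x *m y)) ->
  (forall x, K x -> K (invmx x)) -> msubset (gen S) K.
Proof. by move=> sSK K1 Km Ki x; elim=> //; auto. Qed.

Lemma derived_mono (F : fieldType) (K K' : mset F) :
  msubset K K' -> msubset (derived K) (derived K').
Proof.
move=> sK x; elim=> [|y [a [b [Ka [Kb ->]]]]|y z _ IH1 _ IH2|y _ IH].
- exact: gen_one.
- by apply: gen_in; exists a, b; split; [apply: sK | split; [apply: sK|]].
- exact: gen_mul.
- exact: gen_inv.
Qed.

Lemma Hinv (F : fieldType) (t a b : F) : t != 0 ->
  invmx (mk3 t 0 a 0 1 b 0 0 t^-1) = mk3 t^-1 0 (-a) 0 1 (-b * t) 0 0 t.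
Proof. by move=> t0; apply: inv_eq; rewrite mk3_mul mk3_1; congr mk3; fld. Qed.

Lemma Ninv (F : fieldType) (a b : F) :
  invmx (mk3 1 0 a 0 1 b 0 0 1) = mk3 1 0 (-a) 0 1 (-b) 0 0 1.
Proof. by apply: inv_eq; rewrite mk3_mul mk3_1; congr mk3; ring. Qed.

Lemma N_closed (F : fieldType) :
  [/\ @Ngrp F 1%:M, (forall x y, @Ngrp F x -> Ngrp y -> Ngrp (x *m y)) &
      (forall x, @Ngrp F x -> Ngrp (invmx x))].
Proof.
split.
- by exists 0, 0; rewrite mk3_1.
- move=> x y [a [b ->]] [a' [b' ->]]; exists (a' + a), (b' + b).
  by rewrite mk3_mul; congr mk3; ring.
- by move=> x [a [b ->]]; exists (-a), (-b); rewrite Ninv.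
Qed.

Lemma H_solvable (F : fieldType) : solvable_grp (@Hgrp F).
Proof.
have [N1 Nm Ni] := N_closed F.
exists 2%N => /=.
have s1 : msubset (derived (@Hgrp F)) (@Ngrp F).
  apply: gen_sub => // z [x [y [[t [a [b [t0 ->]]]] [[t' [a' [b' [t0' ->]]]] ->]]]].
  rewrite /commutator !Hinv // !mk3_mul.
  eexists; eexists; congr mk3; try reflexivity; fld.
apply: (@gen_sub _ _ (fun z => z = 1%:M)) => //.
- move=> z [x [y [Dx [Dy ->]]]].
  move: (s1 _ Dx) (s1 _ Dy) => [a [b ->]] [a' [b' ->]].
  by rewrite /commutator !Ninv !mk3_mul mk3_1; congr mk3; ring.
- by move=> x y -> ->; rewrite mulmx1.
- by move=> x ->; rewrite invmx1.
Qed.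

Definition Mshape (F : fieldType) (A : 'M[F]_3) : Prop :=
  SL3 A /\ A i0 i1 = 0 /\ A i1 i0 = 0 /\ A i2 i0 = 0 /\ A i2 i1 = 0.

Lemma Mshape_param (F : fieldType) (A : 'M[F]_3) :
  Mshape A <-> exists d0 d1 u v, [/\ d0 != 0, d1 != 0 &
     A = mk3 d0 0 u 0 d1 v 0 0 (d0 * d1)^-1].
Proof.
split.
  case=> SA [e01 [e10 [e20 e21]]].
  move: SA; rewrite /SL3 [A]mk3E det_mk3 e01 e10 e20 e21 => dA.
  have a0 : A i0 i0 != 0 by apply/eqP => z; apply: (@F01 F); rewrite -dA z; ring.
  have a1 : A i1 i1 != 0 by apply/eqP => z; apply: (@F01 F); rewrite -dA z; ring.
  exists (A i0 i0), (A i1 i1), (A i0 i2), (A i1 i2); split=> //; congr mk3.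
  apply: (mulfI (mulf_neq0 a0 a1)); rewrite mulfV ?mulf_neq0 // -dA; ring.
case=> [d0 [d1 [u [v [d00 d10 ->]]]]].
split; first by rewrite /SL3 det_mk3; fld.
by rewrite !mxE.
Qed.

Lemma NinH (F : fieldType) (a b : F) : Hgrp (mk3 1 0 a 0 1 b 0 0 1).
Proof. by exists 1, a, b; rewrite invr1 oner_eq0. Qed.

Lemma norm_H_shape (F : fieldType) (two : (2 : F) != 0) (a b c d e f g h i : F) :
  normalizer (@Hgrp F) (mk3 a b c d e f g h i) -> b = 0 /\ d = 0 /\ g = 0 /\ h = 0.
Proof.
case=> SA NA.
have eq_of x : Hgrp x -> exists s al be, s != 0 /\
    mk3 a b c d e f g h i *m x = mk3 s 0 al 0 1 be 0 0 s^-1 *m mk3 a b c d e f g h i.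
  move=> Hx; have [s [al [be [s0 E]]]] := (proj1 (NA x) Hx).
  by exists s, al, be; split=> //; apply: conj_eq.
have [s [al [be [s0 E]]]] := eq_of _ (NinH 1 0).
move: E; rewrite !mk3_mul => /mk3_inj [_ _ _ _ [_ _ E20 E21 E22]].
have g0 : g = 0.
  have Q1 : g * (1 - s^-1) = 0 by lin E20.
  have Q2 : g = s^-1 * i - i by lin E22.
  case: (eqVneq (s^-1) 1) => [s1|s1].
    by move: Q2; rewrite s1 => ->; ring.
  by move/eqP: Q1; rewrite mulf_eq0 subr_eq0 [1 == _]eq_sym (negbTE s1) orbF => /eqP.
have [s' [al' [be' [s0' E']]]] := eq_of _ (NinH 0 1).
move: E'; rewrite !mk3_mul => /mk3_inj [_ _ _ _ [_ _ F20 F21 F22]].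
have h0 : h = 0.
  have Q1 : h * (1 - s'^-1) = 0 by lin F21.
  have Q2 : h = s'^-1 * i - i by lin F22.
  case: (eqVneq (s'^-1) 1) => [s1|s1].
    by move: Q2; rewrite s1 => ->; ring.
  by move/eqP: Q1; rewrite mulf_eq0 subr_eq0 [1 == _]eq_sym (negbTE s1) orbF => /eqP.
have i0' : i != 0.
  apply/eqP => z; apply: (@F01 F); move: SA; rewrite /SL3 det_mk3 g0 h0 z => <-; ring.
have [s2 [al2 [be2 [s20 E2]]]] := eq_of (mk3 2 0 0 0 1 0 0 0 2^-1) (ex_intro _ 2 (ex_intro _ 0 (ex_intro _ 0 (conj two erefl)))).
move: E2; rewrite !mk3_mul => /mk3_inj [_ G01 _ G10 [_ _ _ _ G22]].
have s2E : s2 = 2.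
  have Q : i * (s2^-1 - 2^-1) = 0 by move: G22; rewrite ?g0 ?h0 => G22; lin G22.
  move/eqP: Q; rewrite mulf_eq0 (negbTE i0') /= subr_eq0 => /eqP Q.
  by rewrite -[s2]invrK Q invrK.
have b0 : b = 0 by move: G01; rewrite ?g0 ?h0 ?s2E => Q; lin Q.
have d0 : d = 0 by move: G10; rewrite ?g0 ?h0 => Q; lin Q.
by [].
Qed.

Lemma Minv (F : fieldType) (d0 d1 u v : F) : d0 != 0 -> d1 != 0 ->
  invmx (mk3 d0 0 u 0 d1 v 0 0 (d0 * d1)^-1) =
  mk3 d0^-1 0 (- u * d1) 0 d1^-1 (- v * d0) 0 0 (d0 * d1).
Proof. by move=> h0 h1; apply: inv_eq; rewrite mk3_mul mk3_1; congr mk3; fld. Qed.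

Lemma Mshape_inv (F : fieldType) (A : 'M[F]_3) : Mshape A -> Mshape (invmx A).
Proof.
case/Mshape_param => [d0 [d1 [u [v [h0 h1 ->]]]]]; rewrite Minv //.
apply/Mshape_param; exists d0^-1, d1^-1, (- u * d1), (- v * d0).
by rewrite !invr_eq0; split=> //; congr mk3; fld.
Qed.

Lemma NH_iff (F : fieldType) (two : (2 : F) != 0) (A : 'M[F]_3) :
  normalizer (@Hgrp F) A <-> Mshape A.
Proof.
split.
  move=> NA; have SA : SL3 A by case: NA.
  rewrite [A]mk3E in NA; have [b0 [d0 [g0 h0]]] := norm_H_shape two NA.
  by split.
apply: normalizer_crit; first by move=> g [].
  exact: Mshape_inv.
move=> g x /Mshape_param [d0 [d1 [u [v [h0 h1 ->]]]]] [t [a [b [t0 ->]]]].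
rewrite Minv // !mk3_mul; exists t; do 2 eexists; split=> //.
congr mk3; try reflexivity; fld.
Qed.

Lemma Tdiag_param (F : fieldType) (A : 'M[F]_3) :
  Tdiag A -> exists d0 d1, [/\ d0 != 0, d1 != 0 & A = mk3 d0 0 0 0 d1 0 0 0 (d0 * d1)^-1].
Proof.
case=> SA off.
have MA : Mshape A by split=> //; split; [|split; [|split]]; apply: off.
case/Mshape_param: MA => d0 [d1 [u [v [h0 h1 EA]]]].
have u0 : u = 0 by have := off i0 i2 isT; rewrite EA mxE.
have v0 : v = 0 by have := off i1 i2 isT; rewrite EA mxE.
by exists d0, d1; rewrite EA u0 v0.
Qed.

Lemma Tdiag_mem (F : fieldType) (d0 d1 : F) : d0 != 0 -> d1 != 0 ->
  Tdiag (mk3 d0 0 0 0 d1 0 0 0 (d0 * d1)^-1).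
Proof.
move=> h0 h1; split; first by rewrite /SL3 det_mk3; fld.
by move=> i j; elim/ord3P: i; elim/ord3P: j; rewrite // mxE.
Qed.

Lemma semidirect_NH (F : fieldType) (two : (2 : F) != 0) :
  is_semidirect (normalizer (@Hgrp F)) (@Tdiag F) (@Ngrp F).
Proof.
split; [|split].
- move=> A; rewrite NH_iff //; split.
    case/Mshape_param => d0 [d1 [u [v [h0 h1 ->]]]].
    exists (mk3 d0 0 0 0 d1 0 0 0 (d0 * d1)^-1), (mk3 1 0 (u / d0) 0 1 (v / d1) 0 0 1).
    split; first exact: Tdiag_mem.
    split; first by do 2 eexists.
    by rewrite mk3_mul; congr mk3; fld.
  case=> t [n [/Tdiag_param [d0 [d1 [h0 h1 ->]]] [[a [b ->]] ->]]].
  apply/Mshape_param; exists d0, d1, (d0 * a), (d1 * b); split=> //.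
  by rewrite mk3_mul; congr mk3; ring.
- move=> x Tx [a [b Ex]].
  have a0 : a = 0 by have := Tx.2 i0 i2 isT; rewrite Ex mxE.
  have b0 : b = 0 by have := Tx.2 i1 i2 isT; rewrite Ex mxE.
  by rewrite Ex a0 b0 mk3_1.
- move=> t n /Tdiag_param [d0 [d1 [h0 h1 ->]]] [a [b ->]].
  rewrite (Minv 0 0 h0 h1) oppr0 !mul0r.
  rewrite !mk3_mul; do 2 eexists; congr mk3; try reflexivity; fld.
Qed.

Lemma Mmem (F : fieldType) (d0 d1 u v : F) : d0 != 0 -> d1 != 0 ->
  Mshape (mk3 d0 0 u 0 d1 v 0 0 (d0 * d1)^-1).
Proof. by move=> h0 h1; apply/Mshape_param; exists d0, d1, u, v. Qed.

Lemma norm_M_shape (F : fieldType) (two : (2 : F) != 0) (a b c d e f g h i : F) :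
  normalizer (@Mshape F) (mk3 a b c d e f g h i) ->
  g = 0 /\ h = 0 /\ ((b = 0 /\ d = 0) \/ (a = 0 /\ e = 0)).
Proof.
case=> SA NA.
have eq_of x : Mshape x -> exists e0 e1 al be, [/\ e0 != 0, e1 != 0 &
    mk3 a b c d e f g h i *m x =
    mk3 e0 0 al 0 e1 be 0 0 (e0 * e1)^-1 *m mk3 a b c d e f g h i].
  move=> Hx; have /Mshape_param [e0 [e1 [al [be [s0 s1 E]]]]] := (proj1 (NA x) Hx).
  by exists e0, e1, al, be; split=> //; apply: conj_eq.
have o1 : (1 : F) != 0 by apply: oner_neq0.
have i11 : (1 * 1 : F)^-1 = 1 by rewrite mulr1 invr1.
have [e0 [e1 [al [be [s0 s1 E]]]]] := eq_of _ (Mmem 1 0 o1 o1).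
move: E; rewrite !mk3_mul => /mk3_inj [_ _ _ _ [_ _ E20 E21 E22]].
set w := (e0 * e1)^-1 in E20 E21 E22.
have g0 : g = 0.
  have Q1 : g * (1 - w) = 0 by lin E20.
  have Q2 : g = w * i - i by move: E22; rewrite i11 => E22; lin E22.
  case: (eqVneq w 1) => [w1|w1].
    by move: Q2; rewrite w1 => ->; ring.
  by move/eqP: Q1; rewrite mulf_eq0 subr_eq0 [1 == _]eq_sym (negbTE w1) orbF => /eqP.
have [e0' [e1' [al' [be' [s0' s1' E']]]]] := eq_of _ (Mmem 0 1 o1 o1).
move: E'; rewrite !mk3_mul => /mk3_inj [_ _ _ _ [_ _ F20 F21 F22]].
set w' := (e0' * e1')^-1 in F20 F21 F22.
have h0 : h = 0.
  have Q1 : h * (1 - w') = 0 by lin F21.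
  have Q2 : h = w' * i - i by move: F22; rewrite i11 => F22; lin F22.
  case: (eqVneq w' 1) => [w1|w1].
    by move: Q2; rewrite w1 => ->; ring.
  by move/eqP: Q1; rewrite mulf_eq0 subr_eq0 [1 == _]eq_sym (negbTE w1) orbF => /eqP.
have [f0 [f1 [al2 [be2 [t0 t1 E2]]]]] := eq_of _ (Mmem 0 0 two o1).
move: E2; rewrite !mk3_mul => /mk3_inj [G00 G01 _ G10 [G11 _ _ _ _]].
move: G00 G01 G10 G11; rewrite g0 h0 => G00 G01 G10 G11.
have Ea : a * (f0 - 2) = 0 by lin G00.
have Eb : b * (f0 - 1) = 0 by lin G01.
have Ed : d * (f1 - 2) = 0 by lin G10.
have Ee : e * (f1 - 1) = 0 by lin G11.
have det : i * (a * e - b * d) = 1 by move: SA; rewrite /SL3 det_mk3 g0 h0 => <-; ring.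
have nz (x y : F) : x * y = 1 -> y != 0.
  by move=> xy; apply/eqP => y0; move: xy; rewrite y0 mulr0; apply: F01.
split=> //; split=> //.
case: (eqVneq a 0) => [a0|a0]; [right|left].
  move: det; rewrite a0 mul0r sub0r mulrN => /eqP; rewrite -mulNr => /eqP det.
  have /nz : (i * - b) * d = 1 by rewrite -det; ring.
  move=> d0; move/eqP: Ed; rewrite mulf_eq0 (negbTE d0) /= subr_eq0 => /eqP f12.
  move/eqP: Ee; rewrite f12 mulf_eq0 => /orP [/eqP //|].
  by rewrite (_ : 2 - 1 = 1 :> F) ?oner_eq0 //; ring.
move/eqP: Ea; rewrite mulf_eq0 (negbTE a0) /= subr_eq0 => /eqP f02.
have b0 : b = 0.
  move/eqP: Eb; rewrite f02 mulf_eq0 => /orP [/eqP //|].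
  by rewrite (_ : 2 - 1 = 1 :> F) ?oner_eq0 //; ring.
split=> //.
move: det; rewrite b0 mul0r subr0 => det.
have /nz : (i * a) * e = 1 by rewrite -det; ring.
move=> e0'' ; move/eqP: Ee; rewrite mulf_eq0 (negbTE e0'') /= subr_eq0 => /eqP f11.
by move/eqP: Ed; rewrite f11 mulf_eq0 => /orP [/eqP //|]; rewrite (_ : 1 - 2 = -1 :> F) ?oppr_eq0 ?oner_eq0 //; ring.
Qed.

Lemma rho_SL3 (F : fieldType) : SL3 (rho F).
Proof. by rewrite /SL3 /rho det_mk3; ring. Qed.

Lemma rho_rho (F : fieldType) : rho F *m rho F = 1%:M.
Proof. by rewrite /rho mk3_mul mk3_1; congr mk3; ring. Qed.

Lemma rho_inv (F : fieldType) : invmx (rho F) = rho F.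
Proof. exact: inv_eq (rho_rho F). Qed.

Lemma rho_conjM (F : fieldType) (M : 'M[F]_3) : Mshape M -> Mshape (rho F *m M *m rho F).
Proof.
case/Mshape_param => d0 [d1 [u [v [h0 h1 ->]]]].
apply/Mshape_param; exists d1, d0, (-v), (-u); split=> //.
by rewrite /rho !mk3_mul; congr mk3; fld.
Qed.

Lemma Mconj (F : fieldType) (g x : 'M[F]_3) : Mshape g -> Mshape x -> Mshape (g *m x *m invmx g).
Proof.
move=> Mg Mx; split.
  by apply: SL3_mul; [apply: SL3_mul; [case: Mg|case: Mx] | apply: SL3_inv; case: Mg].
case/Mshape_param: Mg => d0 [d1 [u [v [h0 h1 ->]]]].
case/Mshape_param: Mx => e0 [e1 [u' [v' [k0 k1 ->]]]].
by rewrite Minv // !mk3_mul !mxE /=; split; [|split; [|split]]; ring.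
Qed.

Lemma Mone (F : fieldType) : Mshape (1%:M : 'M[F]_3).
Proof. by split; [rewrite /SL3 det1 | rewrite !mxE]. Qed.

Lemma NN_iff (F : fieldType) (two : (2 : F) != 0) (A : 'M[F]_3) :
  normalizer (@Mshape F) A <-> (Mshape A \/ exists M, Mshape M /\ A = rho F *m M).
Proof.
split.
  move=> NA; have SA : SL3 A by case: NA.
  rewrite [A]mk3E in NA; have [g0 [h0 [[b0 d0]|[a0 e0]]]] := norm_M_shape two NA.
    by left; split.
  right; exists (rho F *m A); split.
    split; first by apply: SL3_mul => //; apply: rho_SL3.
    by rewrite [A]mk3E /rho mk3_mul !mxE /= a0 e0 g0 h0; split; [|split; [|split]]; ring.
  by rewrite mulmxA rho_rho mul1mx.
move=> SA; apply: (@normalizer_crit F (fun A => Mshape A \/ exists M, Mshape M /\ A = rho F *m M) _ _ _ _ A SA).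
- move=> g [[]//|[M [[SM _] ->]]]; apply: SL3_mul => //; exact: rho_SL3.
- move=> g [Mg|[M [MM ->]]]; first by left; apply: Mshape_inv.
  right; exists (rho F *m invmx M *m rho F); split; first by apply: rho_conjM; apply: Mshape_inv.
  rewrite invmxM3; [|exact: rho_SL3|by case: MM].
  by rewrite rho_inv !mulmxA rho_rho mul1mx.
- move=> g x [Mg|[M [MM ->]]] Mx; first exact: Mconj.
  rewrite invmxM3; [|exact: rho_SL3|by case: MM].
  rewrite rho_inv !mulmxA.
  have -> : rho F *m M *m x *m invmx M *m rho F = rho F *m (M *m x *m invmx M) *m rho F.
    by rewrite !mulmxA.
  by apply: rho_conjM; apply: Mconj.
Qed.

Lemma NN_final (F : fieldType) (two : (2 : F) != 0) :
  mseteq (normalizer (normalizer (@Hgrp F)))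
         (fun A => normalizer (@Hgrp F) A \/
                   exists M, normalizer (@Hgrp F) M /\ A = rho F *m M) /\
  ~ mseteq (normalizer (normalizer (@Hgrp F))) (normalizer (@Hgrp F)).
Proof.
have E1 := normalizer_ext (fun A => NH_iff two A).
split.
  move=> A; rewrite E1 NN_iff // NH_iff //.
  split; case=> [h|[M [h ->]]]; [by left | | by left | ]; right; exists M; split=> //.
    by rewrite NH_iff.
  by rewrite -NH_iff.
move=> E; have : normalizer (normalizer (@Hgrp F)) (rho F).
  rewrite E1 NN_iff //; right; exists 1%:M; split; [exact: Mone | by rewrite mulmx1].
rewrite E NH_iff // => [[_ [h _]]]; move: h; rewrite /rho mxE /=; apply/eqP; exact: oner_neq0.
Qed.

Definition Bor (F : fieldType) : mset F :=
  fun A => SL3 A /\ A i1 i0 = 0 /\ A i2 i0 = 0 /\ A i2 i1 = 0.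

Lemma Bor_param (F : fieldType) (A : 'M[F]_3) :
  Bor A <-> exists d0 d1 u v w, [/\ d0 != 0, d1 != 0 &
     A = mk3 d0 u v 0 d1 w 0 0 (d0 * d1)^-1].
Proof.
split.
  case=> SA [e10 [e20 e21]].
  move: SA; rewrite /SL3 [A]mk3E det_mk3 e10 e20 e21 => dA.
  have a0 : A i0 i0 != 0 by apply/eqP => z; apply: (@F01 F); rewrite -dA z; ring.
  have a1 : A i1 i1 != 0 by apply/eqP => z; apply: (@F01 F); rewrite -dA z; ring.
  exists (A i0 i0), (A i1 i1), (A i0 i1), (A i0 i2), (A i1 i2); split=> //; congr mk3.
  apply: (mulfI (mulf_neq0 a0 a1)); rewrite mulfV ?mulf_neq0 // -dA; ring.
case=> [d0 [d1 [u [v [w [d00 d10 ->]]]]]].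
split; first by rewrite /SL3 det_mk3; fld.
by rewrite !mxE.
Qed.

Lemma Binv (F : fieldType) (d0 d1 u v w : F) : d0 != 0 -> d1 != 0 ->
  invmx (mk3 d0 u v 0 d1 w 0 0 (d0 * d1)^-1) =
  mk3 d0^-1 (- u / (d0 * d1)) (u * w - v * d1) 0 d1^-1 (- w * d0) 0 0 (d0 * d1).
Proof. by move=> h0 h1; apply: inv_eq; rewrite mk3_mul mk3_1; congr mk3; fld. Qed.

Lemma Bor_subgroup (F : fieldType) : subgroup (@Bor F).
Proof.
split; first by move=> A [].
split; first by split; [rewrite /SL3 det1 | rewrite !mxE].
split.
  move=> x y /Bor_param [d0 [d1 [u [v [w [h0 h1 ->]]]]]] /Bor_param [d0' [d1' [u' [v' [w' [h0' h1' ->]]]]]].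
  apply/Bor_param; exists (d0 * d0'), (d1 * d1'), (d0 * u' + u * d1'),
    (d0 * v' + u * w' + v * (d0' * d1')^-1), (d1 * w' + w * (d0' * d1')^-1).
  rewrite !mulf_neq0 //; split=> //; rewrite mk3_mul; congr mk3; fld.
move=> x /Bor_param [d0 [d1 [u [v [w [h0 h1 ->]]]]]]; rewrite Binv //.
apply/Bor_param; exists d0^-1, d1^-1, (- u / (d0 * d1)), (u * w - v * d1), (- w * d0).
by rewrite !invr_eq0; split=> //; congr mk3; fld.
Qed.

Definition PB (F : fieldType) (p : mpoly F) : Prop :=
  p = PVar F i1 i0 \/ p = PVar F i2 i0 \/ p = PVar F i2 i1.

Lemma Bor_closed (F : fieldType) : closed_subgroup (@Bor F).
Proof.
split; first exact: Bor_subgroup.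
exists (@PB F) => A; split.
  by case=> SA [e10 [e20 e21]]; split=> // p [->|[->|->]].
case=> SA P; split=> //.
split; first exact: (P _ (or_introl erefl)).
split; first exact: (P _ (or_intror (or_introl erefl))).
exact: (P _ (or_intror (or_intror erefl))).
Qed.

Lemma Bor_connected (F : closedFieldType) : zconnected (@Bor F).
Proof.
apply: zconn_path => _ _ /Bor_param [d0 [d1 [u [v [w [h0 h1 ->]]]]]]
  /Bor_param [d0' [d1' [u' [v' [w' [h0' h1' ->]]]]]].
pose D := lin d0 d0' * lin d1 d1'.
exists D, (fun s => mk3 (lin d0 d0').[s] (lin u u').[s] (lin v v').[s] 0 (lin d1 d1').[s]
   (lin w w').[s] 0 0 (D.[s])^-1).
rewrite /D !hornerM !lin0 !lin1 !mulf_neq0 //; split=> //.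
split.
  move=> s; rewrite hornerM mulf_eq0 negb_or => /andP [n0 n1].
  by apply/Bor_param; do 5 eexists; split; [exact: n0 | exact: n1 | idtac].
move=> i j; elim/ord3P: i; elim/ord3P: j.
all: first [ apply: ratrep_invE => s _; by rewrite mxE
           | apply: (@ratrep_polyE _ _ 0) => s; by rewrite mxE /= horner0
           | apply: (@ratrep_polyE _ _ (lin d0 d0')) => s; by rewrite mxE
           | apply: (@ratrep_polyE _ _ (lin d1 d1')) => s; by rewrite mxE
           | apply: (@ratrep_polyE _ _ (lin u u')) => s; by rewrite mxE
           | apply: (@ratrep_polyE _ _ (lin v v')) => s; by rewrite mxE
           | apply: (@ratrep_polyE _ _ (lin w w')) => s; by rewrite mxE ].
Qed.

Definition Ush (F : fieldType) : mset F := fun A => exists x y z, A = mk3 1 x y 0 1 z 0 0 1.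
Definition Zsh (F : fieldType) : mset F := fun A => exists c, A = mk3 1 0 c 0 1 0 0 0 1.

Lemma Uinv (F : fieldType) (x y z : F) :
  invmx (mk3 1 x y 0 1 z 0 0 1) = mk3 1 (-x) (x * z - y) 0 1 (-z) 0 0 1.
Proof. by apply: inv_eq; rewrite mk3_mul mk3_1; congr mk3; ring. Qed.

Lemma Bor_solvable (F : fieldType) : solvable_grp (@Bor F).
Proof.
have s1 : msubset (derived (@Bor F)) (@Ush F).
  apply: gen_sub.
  - move=> z [x [y [/Bor_param [d0 [d1 [u [v [w [h0 h1 ->]]]]]] [/Bor_param [d0' [d1' [u' [v' [w' [h0' h1' ->]]]]]] ->]]]].
    rewrite /commutator !Binv // !mk3_mul.
    do 3 eexists; congr mk3; try reflexivity; fld.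
  - by exists 0, 0, 0; rewrite mk3_1.
  - move=> x y [a [b [c ->]]] [a' [b' [c' ->]]]; rewrite mk3_mul.
    by do 3 eexists; congr mk3; try reflexivity; ring.
  - by move=> x [a [b [c ->]]]; rewrite Uinv; do 3 eexists.
have s2 : msubset (derived (@Ush F)) (@Zsh F).
  apply: gen_sub.
  - move=> z [x [y [[a [b [c ->]]] [[a' [b' [c' ->]]] ->]]]].
    rewrite /commutator !Uinv !mk3_mul.
    by eexists; congr mk3; try reflexivity; ring.
  - by exists 0; rewrite mk3_1.
  - move=> x y [a ->] [a' ->]; rewrite mk3_mul.
    by eexists; congr mk3; try reflexivity; ring.
  - by move=> x [a ->]; rewrite Uinv; eexists; congr mk3; ring.
have s3 : msubset (derived (@Zsh F)) (fun z => z = 1%:M).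
  apply: gen_sub => //.
  - move=> z [x [y [[a ->] [[a' ->] ->]]]].
    by rewrite /commutator !Uinv !mk3_mul mk3_1; congr mk3; ring.
  - by move=> x y -> ->; rewrite mulmx1.
  - by move=> x ->; rewrite invmx1.
exists 3%N => /= x h; apply: s3; apply: (derived_mono s2); apply: (derived_mono (derived_mono s1)).
exact: h.
Qed.

Definition U01 (F : fieldType) (x : F) := mk3 1 x 0 0 1 0 0 0 1.
Definition U12 (F : fieldType) (x : F) := mk3 1 0 0 0 1 x 0 0 1.
Definition U02 (F : fieldType) (x : F) := mk3 1 0 x 0 1 0 0 0 1.
Definition L10 (F : fieldType) (x : F) := mk3 1 0 0 x 1 0 0 0 1.
Definition L21 (F : fieldType) (x : F) := mk3 1 0 0 0 1 0 0 x 1.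
Definition L20 (F : fieldType) (x : F) := mk3 1 0 0 0 1 0 x 0 1.

Lemma Umem (F : fieldType) (x y z : F) : Bor (mk3 1 x y 0 1 z 0 0 1).
Proof. by split; [rewrite /SL3 det_mk3; ring | rewrite !mxE]. Qed.

Lemma K_target (F : fieldType) (K : mset F) (w : 'M[F]_3) (U Y : F -> 'M[F]_3) :
  subgroup K -> K w -> (forall x, K (U x)) ->
  (forall y, exists x, w *m U x = Y y *m w) -> forall y, K (Y y).
Proof.
move=> sK Kw KU E y; have [x Ex] := E y.
exact: conj_in sK Kw (KU x) Ex.
Qed.

Lemma nz3 (F : fieldType) (x y : F) : x * y = 1 -> y != 0.
Proof. by move=> xy; apply/eqP => y0; move: xy; rewrite y0 mulr0; apply: F01. Qed.

Lemma reduce_neg (F : fieldType) (K : mset F) (A : 'M[F]_3) :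
  subgroup K -> msubset (@Bor F) K -> K A -> ~ Bor A ->
  (forall x, K (L10 x)) \/ (forall x, K (L21 x)).
Proof.
move=> sK BK KA nBA.
have Kmul : forall x y, K x -> K y -> K (x *m y) by case: sK => _ [_ []].
have KSL : forall x, K x -> SL3 x by case: sK.
have KU : forall x y z : F, K (mk3 1 x y 0 1 z 0 0 1) by move=> x y z; apply: BK; apply: Umem.
have SA := KSL _ KA.
move: KA nBA SA; rewrite [A]mk3E; move: (A i0 i0) (A i0 i1) (A i0 i2) (A i1 i0) (A i1 i1)
  (A i1 i2) (A i2 i0) (A i2 i1) (A i2 i2) => a b c d e f g h i KA nBA SA.
case: (eqVneq g 0) => [g0|gn0]; last first.
  have [p [q [r [s E1]]]] : exists p q r s,
      mk3 1 0 (-a/g) 0 1 (-d/g) 0 0 1 *m mk3 a b c d e f g h i *m mk3 1 (-h/g) (-i/g) 0 1 0 0 0 1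
      = mk3 0 p q 0 r s g 0 0.
    by rewrite !mk3_mul; do 4 eexists; congr mk3; try reflexivity; fld.
  have Kw1 : K (mk3 0 p q 0 r s g 0 0) by rewrite -E1; exact: (Kmul _ _ (Kmul _ _ (KU _ _ _) KA) (KU _ _ _)).
  have dw1 : g * (p * s - q * r) = 1.
    by have := KSL _ Kw1; rewrite /SL3 det_mk3 => <-; ring.
  case: (eqVneq r 0) => [r0|rn0].
    have ps : (g * s) * p = 1 by rewrite -dw1 r0; ring.
    have pn0 := nz3 ps.
    have Kw2 : K (mk3 0 p 0 0 0 s g 0 0).
      have -> : mk3 0 p 0 0 0 s g 0 0 = mk3 0 p q 0 r s g 0 0 *m mk3 1 0 0 0 1 (-q/p) 0 0 1.
        by rewrite mk3_mul r0; congr mk3; fld.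
      exact: (Kmul _ _ Kw1 (KU _ _ _)).
    have K20 : forall y, K (L20 y).
      apply: (K_target (U := @U01 F)) sK Kw2 _ _ => [x|y]; first exact: KU.
      exists (y * p / g); rewrite /U01 /L20 !mk3_mul; congr mk3; fld.
    right => y.
    have -> : L21 y = L20 y *m U01 1 *m L20 (-y) *m U01 (-1).
      by rewrite /L21 /L20 /U01 !mk3_mul; congr mk3; ring.
    exact: (Kmul _ _ (Kmul _ _ (Kmul _ _ (K20 _) (KU _ _ _)) (K20 _)) (KU _ _ _)).
  have Kw2 : K (mk3 0 0 (q - p * s / r) 0 r 0 g 0 0).
    have -> : mk3 0 0 (q - p * s / r) 0 r 0 g 0 0 =
       mk3 1 (-p/r) 0 0 1 0 0 0 1 *m mk3 0 p q 0 r s g 0 0 *m mk3 1 0 0 0 1 (-s/r) 0 0 1.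
      by rewrite !mk3_mul; congr mk3; fld.
    exact: (Kmul _ _ (Kmul _ _ (KU _ _ _) Kw1) (KU _ _ _)).
  right; apply: (K_target (U := @U01 F)) sK Kw2 _ _ => [x|y]; first exact: KU.
  exists (y * r / g); rewrite /U01 /L21 !mk3_mul; congr mk3; fld.
case: (eqVneq h 0) => [h0|hn0]; last first.
  have [a' [c' [d' [f' E1]]]] : exists a' c' d' f',
      mk3 1 0 (-b/h) 0 1 (-e/h) 0 0 1 *m mk3 a b c d e f g h i *m mk3 1 0 0 0 1 (-i/h) 0 0 1
      = mk3 a' 0 c' d' 0 f' 0 h 0.
    by rewrite !mk3_mul g0; do 4 eexists; congr mk3; try reflexivity; fld.
  have Kw1 : K (mk3 a' 0 c' d' 0 f' 0 h 0) by rewrite -E1; exact: (Kmul _ _ (Kmul _ _ (KU _ _ _) KA) (KU _ _ _)).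
  have dw1 : h * (c' * d' - a' * f') = 1.
    by have := KSL _ Kw1; rewrite /SL3 det_mk3 => <-; ring.
  case: (eqVneq d' 0) => [d0|dn0].
    have af : (- h * f') * a' = 1 by rewrite -dw1 d0; ring.
    have fa : (- h * a') * f' = 1 by rewrite -dw1 d0; ring.
    have an0 := nz3 af; have fn0 := nz3 fa.
    have Kw2 : K (mk3 a' 0 0 0 0 f' 0 h 0).
      have -> : mk3 a' 0 0 0 0 f' 0 h 0 = mk3 a' 0 c' d' 0 f' 0 h 0 *m mk3 1 0 (-c'/a') 0 1 0 0 0 1.
        by rewrite mk3_mul d0; congr mk3; fld.
      exact: (Kmul _ _ Kw1 (KU _ _ _)).
    right; apply: (K_target (U := @U12 F)) sK Kw2 _ _ => [x|y]; first exact: KU.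
    exists (y * f' / h); rewrite /U12 /L21 !mk3_mul; congr mk3; fld.
  have cd : (h * d') * (c' - a' * f' / d') = 1 by rewrite -dw1; field.
  have cn0 := nz3 cd.
  have Kw2 : K (mk3 0 0 (c' - a' * f' / d') d' 0 0 0 h 0).
    have -> : mk3 0 0 (c' - a' * f' / d') d' 0 0 0 h 0 =
       mk3 1 (-a'/d') 0 0 1 0 0 0 1 *m mk3 a' 0 c' d' 0 f' 0 h 0 *m mk3 1 0 (-f'/d') 0 1 0 0 0 1.
      by rewrite !mk3_mul; congr mk3; fld.
    exact: (Kmul _ _ (Kmul _ _ (KU _ _ _) Kw1) (KU _ _ _)).
  left; apply: (K_target (U := @U02 F)) sK Kw2 _ _ => [x|y]; first exact: KU.
  exists (y * (c' - a' * f' / d') / d'); rewrite /U02 /L10 !mk3_mul; congr mk3; fld.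
have dn0 : d != 0.
  by apply/eqP => d0; apply: nBA; split; [| rewrite !mxE].
have [p [q [r E1]]] : exists p q r,
    mk3 1 (-a/d) 0 0 1 0 0 0 1 *m mk3 a b c d e f g h i *m mk3 1 (-e/d) 0 0 1 0 0 0 1
    = mk3 0 p q d 0 r 0 0 i.
  by rewrite !mk3_mul g0 h0; do 3 eexists; congr mk3; try reflexivity; fld.
have Kw1 : K (mk3 0 p q d 0 r 0 0 i) by rewrite -E1; exact: (Kmul _ _ (Kmul _ _ (KU _ _ _) KA) (KU _ _ _)).
have dw1 : (- d * i) * p = 1.
  by have := KSL _ Kw1; rewrite /SL3 det_mk3 => <-; ring.
have pn0 := nz3 dw1.
have in0 : i != 0 by apply: (@nz3 _ (- d * p)); rewrite -dw1; ring.
left => y.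
have KY : K (mk3 1 0 0 y 1 (- y * q / i) 0 0 1).
  have ex : forall y', exists x, mk3 0 p q d 0 r 0 0 i *m U01 x =
      (fun y => mk3 1 0 0 y 1 (- y * q / i) 0 0 1) y' *m mk3 0 p q d 0 r 0 0 i.
    move=> y'; exists (y' * p / d); rewrite /U01 !mk3_mul; congr mk3; fld.
  exact: (K_target sK Kw1 (fun x => KU _ _ _) ex y).
have -> : L10 y = mk3 1 0 0 0 1 (y * q / i) 0 0 1 *m mk3 1 0 0 y 1 (- y * q / i) 0 0 1.
  by rewrite /L10 mk3_mul; congr mk3; fld.
exact: (Kmul _ _ (KU _ _ _) KY).
Qed.

Lemma sl2_nonsolv (F : fieldType)
  (K : mset F) (U L : F -> 'M[F]_3) (hm : 'M[F]_3) :
  subgroup K -> (forall x, K (U x)) -> (forall x, K (L x)) ->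
  U 1 <> 1%:M ->
  (forall S : mset F, (forall x, S (U x)) -> (forall x, S (L x)) ->
      (forall x y, S x -> S y -> S (x *m y)) -> S hm) ->
  (forall y, exists z, U y = commutator hm (U z)) ->
  (forall y, exists z, L y = commutator hm (L z)) ->
  ~ solvable_grp K.
Proof.
move=> sK KU KL U1 Hh cU cL [n sn].
suff : forall m, [/\ forall x, iter m (@derived F) K (U x), forall x, iter m (@derived F) K (L x) &
    forall x y, iter m (@derived F) K x -> iter m (@derived F) K y -> iter m (@derived F) K (x *m y)].
  by case/(_ n) => /(_ 1) /sn.
elim=> [|m [IU IL IM]] /=.
  by split=> //; case: sK => _ [_ []].
have hS := Hh _ IU IL IM.
split.
- move=> y; have [z ->] := cU y; apply: gen_in; exists hm, (U z); split=> //.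
- move=> y; have [z ->] := cL y; apply: gen_in; exists hm, (L z); split=> //.
- by move=> x y; apply: gen_mul.
Qed.

Lemma inv_diag (F : fieldType) (a b c : F) : a != 0 -> b != 0 -> c != 0 ->
  invmx (mk3 a 0 0 0 b 0 0 0 c) = mk3 a^-1 0 0 0 b^-1 0 0 0 c^-1.
Proof. by move=> ha hb hc; apply: inv_eq; rewrite mk3_mul mk3_1; congr mk3; fld. Qed.


Lemma U01inv (F : fieldType) (z : F) : invmx (U01 z) = U01 (-z).
Proof. by apply: inv_eq; rewrite /U01 mk3_mul mk3_1; congr mk3; ring. Qed.
Lemma L10inv (F : fieldType) (z : F) : invmx (L10 z) = L10 (-z).
Proof. by apply: inv_eq; rewrite /L10 mk3_mul mk3_1; congr mk3; ring. Qed.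
Lemma U12inv (F : fieldType) (z : F) : invmx (U12 z) = U12 (-z).
Proof. by apply: inv_eq; rewrite /U12 mk3_mul mk3_1; congr mk3; ring. Qed.
Lemma L21inv (F : fieldType) (z : F) : invmx (L21 z) = L21 (-z).
Proof. by apply: inv_eq; rewrite /L21 mk3_mul mk3_1; congr mk3; ring. Qed.

Lemma nonsolvA (F : fieldType) (two : (2 : F) != 0) (three : (3 : F) != 0) (K : mset F) :
  subgroup K -> (forall x, K (U01 x)) -> (forall x, K (L10 x)) -> ~ solvable_grp K.
Proof.
move=> sK KU KL.
have i2 : (2 : F)^-1 != 0 by rewrite invr_eq0.
apply: (@sl2_nonsolv F K (@U01 F) (@L10 F) (mk3 2 0 0 0 2^-1 0 0 0 1)) => //.
- by rewrite /U01 mk3_1 => /mk3_inj [_ h _ _ _]; exact: F01 (esym h).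
- move=> S SU SL SM.
  have -> : (mk3 2 0 0 0 2^-1 0 0 0 1 : 'M[F]_3) =
    U01 2 *m L10 (- 2^-1) *m U01 2 *m U01 (-1) *m L10 1 *m U01 (-1).
    by rewrite /U01 /L10 !mk3_mul; congr mk3; fld.
  exact: (SM _ _ (SM _ _ (SM _ _ (SM _ _ (SM _ _ (SU _) (SL _)) (SU _)) (SU _)) (SL _)) (SU _)).
- move=> y; exists (y * 4 / 3); rewrite /commutator inv_diag ?oner_eq0 // U01inv.
  by rewrite /U01 !mk3_mul; congr mk3; fld.
- move=> y; exists (- y / 3); rewrite /commutator inv_diag ?oner_eq0 // L10inv.
  by rewrite /L10 !mk3_mul; congr mk3; fld.
Qed.

Lemma nonsolvB (F : fieldType) (two : (2 : F) != 0) (three : (3 : F) != 0) (K : mset F) :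
  subgroup K -> (forall x, K (U12 x)) -> (forall x, K (L21 x)) -> ~ solvable_grp K.
Proof.
move=> sK KU KL.
have i2 : (2 : F)^-1 != 0 by rewrite invr_eq0.
apply: (@sl2_nonsolv F K (@U12 F) (@L21 F) (mk3 1 0 0 0 2 0 0 0 2^-1)) => //.
- by rewrite /U12 mk3_1 => /mk3_inj [_ _ _ _ [_ h _ _ _]]; exact: F01 (esym h).
- move=> S SU SL SM.
  have -> : (mk3 1 0 0 0 2 0 0 0 2^-1 : 'M[F]_3) =
    U12 2 *m L21 (- 2^-1) *m U12 2 *m U12 (-1) *m L21 1 *m U12 (-1).
    by rewrite /U12 /L21 !mk3_mul; congr mk3; fld.
  exact: (SM _ _ (SM _ _ (SM _ _ (SM _ _ (SM _ _ (SU _) (SL _)) (SU _)) (SU _)) (SL _)) (SU _)).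
- move=> y; exists (y * 4 / 3); rewrite /commutator inv_diag ?oner_eq0 // U12inv.
  by rewrite /U12 !mk3_mul; congr mk3; fld.
- move=> y; exists (- y / 3); rewrite /commutator inv_diag ?oner_eq0 // L21inv.
  by rewrite /L21 !mk3_mul; congr mk3; fld.
Qed.

Lemma Bor_max (F : fieldType) (two : (2 : F) != 0) (three : (3 : F) != 0) (K : mset F) :
  closed_subgroup K -> solvable_grp K -> msubset (@Bor F) K -> mseteq K (@Bor F).
Proof.
move=> [sK _] solK BK A; split; last exact: BK.
move=> KA; apply: NNPP => nBA.
have KU : forall x y z : F, K (mk3 1 x y 0 1 z 0 0 1) by move=> x y z; apply: BK; apply: Umem.
case: (reduce_neg sK BK KA nBA) => KL.
  by apply: (nonsolvA two three sK _ KL) => // x; apply: KU.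
by apply: (nonsolvB two three sK _ KL) => // x; apply: KU.
Qed.

Definition g0m (F : fieldType) : 'M[F]_3 := mk3 0 0 1 1 0 0 1 1 0.

Lemma g0_SL3 (F : fieldType) : SL3 (g0m F).
Proof. by rewrite /SL3 /g0m det_mk3; ring. Qed.

Lemma open_back (F : fieldType) (a00 a01 a02 a11 a12 a21 a22 t k : F) :
  t != 0 -> k != 0 -> a21 != 0 ->
  SL3 (mk3 a00 a01 a02 ((k + a11) * t) a11 a12 (t * a21) a21 a22) ->
  exists b h, Bor b /\ Hgrp h /\
    mk3 a00 a01 a02 ((k + a11) * t) a11 a12 (t * a21) a21 a22 = b *m g0m F *m h.
Proof.
move=> t0 k0 a0 SA.
pose a := (a12 - a11 * (a22 / a21)) / k.
pose c := a22 / a21 - a.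
pose b01 := a00 / t - a01.
pose b00 := t * (a02 - b01 * a - a01 * (a22 / a21)).
exists (mk3 b00 b01 a01 0 k a11 0 0 a21), (mk3 t 0 a 0 1 c 0 0 t^-1).
have E : mk3 a00 a01 a02 ((k + a11) * t) a11 a12 (t * a21) a21 a22 =
    mk3 b00 b01 a01 0 k a11 0 0 a21 *m g0m F *m mk3 t 0 a 0 1 c 0 0 t^-1.
  by rewrite /g0m !mk3_mul /c /b00 /b01 /a; congr mk3; fld.
split; last by split=> //; exists t, a, c.
split; last by rewrite !mxE.
move: SA; rewrite /SL3 E !det_mulmx (g0_SL3 F) mulr1 => SA.
rewrite -[RHS]SA det_mk3 [in RHS]det_mk3; fld.
Qed.

Lemma open_char (F : fieldType) (A : 'M[F]_3) : SL3 A ->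
  ((exists b h, Bor b /\ Hgrp h /\ A = b *m g0m F *m h) <->
   [/\ A i2 i1 != 0, A i2 i0 != 0 & A i1 i1 * A i2 i0 - A i2 i1 * A i1 i0 != 0]).
Proof.
move=> SA; split.
  case=> b [h [/Bor_param [d0 [d1 [u [v [w [h0 h1 Eb]]]]]] [[t [a [c [t0 Eh]]]] EA]]].
  have e0 : (d0 * d1)^-1 != 0 by rewrite invr_eq0 mulf_neq0.
  have E21 : A i2 i1 = (d0 * d1)^-1 by rewrite EA Eb Eh /g0m !mk3_mul !mxE /=; ring.
  have E20 : A i2 i0 = (d0 * d1)^-1 * t by rewrite EA Eb Eh /g0m !mk3_mul !mxE /=; ring.
  have E11 : A i1 i1 = w by rewrite EA Eb Eh /g0m !mk3_mul !mxE /=; ring.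
  have E10 : A i1 i0 = (d1 + w) * t by rewrite EA Eb Eh /g0m !mk3_mul !mxE /=; ring.
  rewrite E21 E20 E11 E10 mulf_neq0 //; split=> //.
  have -> : w * ((d0 * d1)^-1 * t) - (d0 * d1)^-1 * ((d1 + w) * t) = - ((d0 * d1)^-1 * d1 * t).
    by ring.
  by rewrite oppr_eq0 !mulf_neq0.
case=> n21 n20 nk.
pose t := A i2 i0 / A i2 i1.
pose k := A i1 i0 / t - A i1 i1.
have t0 : t != 0 by rewrite /t mulf_neq0 ?invr_eq0.
have k0 : k != 0.
  have -> : k = - (A i1 i1 * A i2 i0 - A i2 i1 * A i1 i0) / A i2 i0.
    rewrite /k /t; fld.
  by rewrite mulf_neq0 ?oppr_eq0 ?invr_eq0.
have E20 : A i2 i0 = t * A i2 i1 by rewrite /t; fld.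
have E10 : A i1 i0 = (k + A i1 i1) * t by rewrite /k; fld.
have EA : A = mk3 (A i0 i0) (A i0 i1) (A i0 i2) ((k + A i1 i1) * t) (A i1 i1) (A i1 i2)
   (t * A i2 i1) (A i2 i1) (A i2 i2) by rewrite -E20 -E10 -mk3E.
move: SA; rewrite {1}EA => SA; rewrite {1}EA.
exact: open_back.
Qed.

Definition pO (F : fieldType) : mpoly F :=
  PMul (PMul (PVar F i2 i1) (PVar F i2 i0))
       (PAdd (PMul (PVar F i1 i1) (PVar F i2 i0)) (PMul (PConst (-1)) (PMul (PVar F i2 i1) (PVar F i1 i0)))).

Lemma pOE (F : fieldType) (A : 'M[F]_3) :
  peval (pO F) A = A i2 i1 * A i2 i0 * (A i1 i1 * A i2 i0 - A i2 i1 * A i1 i0).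
Proof. by rewrite /= mulN1r. Qed.

Lemma H_spherical (F : closedFieldType) (two : (2 : F) != 0) (three : (3 : F) != 0) :
  spherical (@Hgrp F).
Proof.
split; first exact: H_closed.
exists (@Bor F); split.
  split; first exact: Bor_closed.
  split; first exact: Bor_connected.
  split; first exact: Bor_solvable.
  by move=> K cK _ sK BK; apply: Bor_max.
exists (g0m F); split; first exact: g0_SL3.
split.
  move=> A [b [h [[Sb _] [Hh ->]]]].
  by apply: SL3_mul; [apply: SL3_mul => //; apply: g0_SL3 | apply: H_SL3].
exists (fun p => p = pO F) => A; split.
  case=> SA nS; split=> // p ->; rewrite pOE.
  apply: NNPP => nz; apply: nS; apply/(open_char SA).
  move/eqP: nz; rewrite !mulf_eq0 !negb_or => /andP [/andP [n1 n2] n3]; split=> //.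
case=> SA P; split=> // /(open_char SA) [n1 n2 n3].
by move: (P _ erefl); rewrite pOE => /eqP; rewrite !mulf_eq0 (negbTE n1) (negbTE n2) (negbTE n3).
Qed.


Unset Implicit Arguments.

Theorem mainTheorem8 (F : closedFieldType) (charF0 : [pchar F] =i pred0) :
  closed_subgroup (@Hgrp F) /\ zconnected (@Hgrp F) /\
  solvable_grp (@Hgrp F) /\ spherical (@Hgrp F) /\
  is_semidirect (normalizer (@Hgrp F)) (@Tdiag F) (@Ngrp F) /\
  mseteq (normalizer (normalizer (@Hgrp F)))
         (fun A => normalizer (@Hgrp F) A \/
                   exists M, normalizer (@Hgrp F) M /\ A = rho F *m M) /\
  ~ mseteq (normalizer (normalizer (@Hgrp F))) (normalizer (@Hgrp F)).
Proof.
have two : (2 : F) != 0 by move/pcharf0P: charF0 => h; rewrite h.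
have three : (3 : F) != 0 by move/pcharf0P: charF0 => h; rewrite h.
split; first exact: H_closed.
split; first exact: H_connected.
split; first exact: H_solvable.
split; first exact: H_spherical.
split; first exact: semidirect_NH.
exact: NN_final.
Qed.
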